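(* Let $\mathfrak{q}$ be an $n\times n$ quantum parameter matrix over a field $k$ and $V$ a $k$-vector space with basis $v_1,\dots,v_n$. There exists an injective group homomorphism $\iota:\mathrm{Stab}(\mathfrak{q})\to\mathrm{Aut}_{\mathrm{gr}}(S_{\mathfrak{q}}(V))$ such that for each $\sigma\in\mathrm{Stab}(\mathfrak{q})$, $\iota(\sigma)$ lies in $\prod_{B\in\mathcal{B}_{\mathfrak{q}}}\mathrm{Hom}(V_B,V_{\sigma(B)})$, i.e. $\iota(\sigma)$ maps $V_B$ to $V_{\sigma(B)}$ for every block $B$ of $\mathfrak{q}$.
   Context: An $n\times n$ quantum parameter matrix is a matrix $\mathfrak{q}=(q_{ij})$ over $k$ with $q_{ii}=1$ and $q_{ij}q_{ji}=1$ for all $i,j$. $S_{\mathfrak{q}}(V)$ is the $k$-algebra generated by $v_1,\dots,v_n$ with relations $v_jv_i=q_{ij}v_iv_j$, graded by $\deg v_i=1$; $\mathrm{Aut}_{\mathrm{gr}}(S_{\mathfrak{q}}(V))$ is the group of degree-preserving algebra automorphisms, viewed as a subgroup of $\mathrm{GL}(V)$ by restriction. $\mathcal{B}_{\mathfrak{q}}$ is the partition of $[n]$ with $i\sim j$ iff rows $i,j$ of $\mathfrak{q}$ are identical; its classes are the blocks. $V_B=\mathrm{span}\{v_i:i\in B\}$ and $\mathfrak{q}_{BC}=(q_{ij})_{i\in B,j\in C}$. With $r=|\mathcal{B}_{\mathfrak{q}}|$, $\mathfrak{S}_r$ permutes the blocks, and $\mathrm{Stab}(\mathfrak{q})=\{\sigma\in\mathfrak{S}_r:|\sigma(B)|=|B|\text{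 and }\mathfrak{q}_{BC}=\mathfrak{q}_{\sigma(B)\sigma(C)}\text{ for all blocks }B,C\}$. *)

(* Defs.v *)
From HB Require Import structures.
From mathcomp Require Import all_boot all_order all_algebra all_fingroup.
Set Implicit Arguments. Unset Strict Implicit. Unset Printing Implicit Defensive.
Import GRing.Theory.
Local Open Scope ring_scope.

(* V = k^n with basis v_i = i-th standard column vector; a linear map of V is a
   matrix G whose i-th column is the coordinate vector of G(v_i). *)

Definition qpm (k : fieldType) (n : nat) (q : 'M[k]_n) : Prop :=
  (forall i, q i i = 1) /\ (forall i j, q i j * q j i = 1).

(* V (x) V is identified with 'M_n via v_a (x) v_b <-> delta_mx a b. *)
Definition tens (k : fieldType) (n : nat) (x y : 'cV[k]_n) : 'M[k]_n := x *m y^T.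

(* defining relation  v_j v_i - q_ij v_i v_j  as an element of V (x) V *)
Definition rel_gen (k : fieldType) (n : nat) (q : 'M[k]_n) (i j : 'I_n) : 'M[k]_n :=
  delta_mx j i - q i j *: delta_mx i j.

(* membership in the relation space R_q = degree-2 part of the ideal of relations *)
Definition in_rel (k : fieldType) (n : nat) (q : 'M[k]_n) (M : 'M[k]_n) : Prop :=
  exists c : 'I_n -> 'I_n -> k,
    M = \sum_(i < n) \sum_(j < n) c i j *: rel_gen q i j.

(* the images G(v_1),...,G(v_n) satisfy the defining relations of S_q(V),
   i.e. (universal property of the presentation) v_i |-> G(v_i) extends to a
   graded algebra endomorphism of S_q(V) *)
Definition respects_rel (k : fieldType) (n : nat) (q : 'M[k]_n) (G : 'M[k]_n) : Prop :=
  forall i j : 'I_n,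
    in_rel q (tens (col j G) (col i G) - q i j *: tens (col i G) (col j G)).

(* Aut_gr(S_q(V)) as a subgroup of GL(V): G invertible, and both G and G^{-1}
   extend to graded algebra endomorphisms (which are then mutually inverse). *)
Definition Autgr (k : fieldType) (n : nat) (q : 'M[k]_n) (G : 'M[k]_n) : Prop :=
  G \in unitmx /\ respects_rel q G /\ respects_rel q (invmx G).

Definition blk (k : fieldType) (n : nat) (q : 'M[k]_n) (i : 'I_n) : {set 'I_n} :=
  [set j | row j q == row i q].

Definition blocks (k : fieldType) (n : nat) (q : 'M[k]_n) : {set {set 'I_n}} :=
  [set blk q i | i : 'I_n].

(* q_{BC} = q_{B'C'} as matrices (rows/columns indexed in increasing order) *)
Definition subq_eq (k : fieldType) (n : nat) (q : 'M[k]_n) (B C B' C' : {set 'I_n}) : Prop :=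
  forall (a b : nat) (i j i' j' : 'I_n),
    onth (enum B) a = Some i -> onth (enum C) b = Some j ->
    onth (enum B') a = Some i' -> onth (enum C') b = Some j' ->
    q i j = q i' j'.

Definition in_Stab (k : fieldType) (n : nat) (q : 'M[k]_n) (s : {perm {set 'I_n}}) : Prop :=
  perm_on (blocks q) s /\
  (forall B, B \in blocks q -> #|s B| = #|B|) /\
  (forall B C, B \in blocks q -> C \in blocks q -> subq_eq q B C (s B) (s C)).

(* Main.v *)
Require Import Defs.
From HB Require Import structures.
From mathcomp Require Import all_boot all_order all_algebra all_fingroup.
Import GRing.Theory.
Local Open Scope ring_scope.
Set Implicit Arguments. Unset Strict Implicit.

Section Aux.
Variables (k : fieldType) (n : nat) (q : 'M[k]_n).

Definition Mp (f : 'I_n -> 'I_n) : 'M[k]_n := \matrix_(a, i) (a == f i)%:R.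

Lemma MpM f g : Mp f *m Mp g = Mp (f \o g).
Proof.
apply/matrixP => a i; rewrite !mxE (bigD1 (g i)) //= !mxE eqxx mulr1.
rewrite big1 ?addr0 // => b /negbTE nb; by rewrite !mxE eq_sym nb mulr0 ?mul0r.
Qed.

Lemma eq_Mp f g : f =1 g -> Mp f = Mp g.
Proof. by move=> e; apply/matrixP => a i; rewrite !mxE e. Qed.

Lemma Mp_id : Mp id = 1%:M.
Proof. by apply/matrixP => a i; rewrite !mxE. Qed.

Lemma in_rel_gen a b : in_rel q (rel_gen q a b).
Proof.
exists (fun i j => ((i == a) && (j == b))%:R).
rewrite (bigD1 a) //= (bigD1 b) //= !eqxx /= scale1r.
rewrite big1 ?addr0; last by move=> j /negbTE ->; rewrite scale0r.
rewrite big1 ?addr0 // => i /negbTE ni; apply: big1 => j _.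
by rewrite ni scale0r.
Qed.

Lemma col_Mp f j : col j (Mp f) = delta_mx (f j) 0.
Proof. by apply/matrixP => a b; rewrite !mxE (ord1 b) eqxx andbT. Qed.

Lemma respects_Mp f : (forall i j, q (f i) (f j) = q i j) -> respects_rel q (Mp f).
Proof.
move=> hf i j; rewrite /tens !col_Mp !trmx_delta !mul_delta_mx -hf.
exact: in_rel_gen.
Qed.

Lemma Mp_perm_Autgr (p : {perm 'I_n}) :
  (forall i j, q (p i) (p j) = q i j) -> Autgr q (Mp p).
Proof.
move=> hp.
have h1 : Mp p *m Mp (p^-1)%g = 1%:M.
  rewrite MpM -Mp_id; apply: eq_Mp => x /=; exact: permKV.
have [u _] := mulmx1_unit h1.
have hinv : invmx (Mp p) = Mp (p^-1)%g.
  by rewrite -[RHS](mulKmx u) h1 mulmx1.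
split=> //; split; first exact: respects_Mp.
rewrite hinv; apply: respects_Mp => i j.
by rewrite -hp !permKV.
Qed.

Lemma blk_refl i : i \in blk q i.
Proof. by rewrite inE. Qed.

Lemma blk_eq i x : x \in blk q i -> blk q x = blk q i.
Proof. by rewrite inE => /eqP hx; apply/setP => j; rewrite !inE hx. Qed.

Lemma blocks_blk B i : B \in blocks q -> i \in B -> B = blk q i.
Proof. by case/imsetP => j _ -> /blk_eq ->. Qed.

Definition pidx (s : {perm {set 'I_n}}) (i : 'I_n) : 'I_n :=
  nth i (enum (s (blk q i))) (index i (enum (blk q i))).

Definition iota (s : {perm {set 'I_n}}) : 'M[k]_n := Mp (pidx s).

Variable s : {perm {set 'I_n}}.
Hypothesis hs : in_Stab q s.

Lemma idx_lt i : (index i (enum (blk q i)) < size (enum (s (blk q i))))%N.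
Proof.
case: hs => _ [hc _]; rewrite -cardE hc ?imset_f // cardE index_mem mem_enum.
exact: blk_refl.
Qed.

Lemma pidx_in i : pidx s i \in s (blk q i).
Proof. by rewrite -mem_enum; apply: mem_nth; apply: idx_lt. Qed.

Lemma sblk_blocks i : s (blk q i) \in blocks q.
Proof. by case: hs => hp _; rewrite (perm_closed _ hp) imset_f. Qed.

Lemma blk_pidx i : blk q (pidx s i) = s (blk q i).
Proof. by rewrite -(blocks_blk (sblk_blocks i) (pidx_in i)). Qed.

Lemma index_pidx i :
  index (pidx s i) (enum (s (blk q i))) = index i (enum (blk q i)).
Proof. by rewrite /pidx index_uniq ?enum_uniq // idx_lt. Qed.

Lemma pidx_inj : injective (pidx s).
Proof.
move=> i j e.
have hb : s (blk q i) = s (blk q j) by rewrite -!blk_pidx e.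
have hb' : blk q i = blk q j by apply: (perm_inj hb).
have := index_pidx i; rewrite e hb index_pidx hb' => hij.
have hi : i \in enum (blk q j) by rewrite mem_enum -hb' blk_refl.
have hj : j \in enum (blk q j) by rewrite mem_enum blk_refl.
by rewrite -(nth_index i hi) -hij (set_nth_default j) ?index_mem // nth_index.
Qed.

Lemma onth_enum (A : {set 'I_n}) x :
  x \in A -> onth (enum A) (index x (enum A)) = Some x.
Proof.
move=> hx; rewrite onthE (nth_map x) ?nth_index ?index_mem ?mem_enum //.
Qed.

Lemma pidx_q i j : q (pidx s i) (pidx s j) = q i j.
Proof.
case: hs => _ [_ hq].
have bi : blk q i \in blocks q by rewrite imset_f.
have bj : blk q j \in blocks q by rewrite imset_f.
symmetry; apply: (hq _ _ bi bj
  (index i (enum (blk q i))) (index j (enum (blk q j))) i j (pidx s i) (pidx s j)).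
- exact/onth_enum/blk_refl.
- exact/onth_enum/blk_refl.
- by rewrite -index_pidx onth_enum // pidx_in.
- by rewrite -index_pidx onth_enum // pidx_in.
Qed.

Lemma iota_Autgr : Autgr q (iota s).
Proof.
have -> : iota s = Mp (perm pidx_inj).
  by apply: eq_Mp => x; rewrite permE.
by apply: Mp_perm_Autgr => i j; rewrite !permE pidx_q.
Qed.

End Aux.

Lemma pidx_comp (k : fieldType) (n : nat) (q : 'M[k]_n) s t :
  in_Stab q s -> in_Stab q t -> pidx q (t * s)%g =1 pidx q s \o pidx q t.
Proof.
move=> hs ht i /=.
have := idx_lt hs (pidx q t i); rewrite (blk_pidx ht) (index_pidx ht) => hl.
rewrite {1}/pidx [in RHS]/pidx (blk_pidx ht) (index_pidx ht) permM.
exact: set_nth_default.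
Qed.

Unset Implicit Arguments. Set Strict Implicit.

Theorem lemma2p5 (k : fieldType) (n : nat) (q : 'M[k]_n) :
  qpm q ->
  exists iota : {perm {set 'I_n}} -> 'M[k]_n,
    (forall s, in_Stab q s -> Autgr q (iota s)) /\
    (* group homomorphism; note (t * s)%g is the permutation "s after t" *)
    (forall s t, in_Stab q s -> in_Stab q t -> iota (t * s)%g = iota s *m iota t) /\
    (forall s t, in_Stab q s -> in_Stab q t -> iota s = iota t -> s = t) /\
    (forall s B, in_Stab q s -> B \in blocks q ->
       forall (i a : 'I_n), i \in B -> iota s a i != 0 -> a \in s B).
Proof.
move=> _.
have hB : forall s B, in_Stab q s -> B \in blocks q ->
       forall (i a : 'I_n), i \in B -> iota q s a i != 0 -> a \in s B.
  move=> s B hs hBq i a hi; rewrite /iota /Mp mxE.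
  case: (a =P pidx q s i) => [-> _|_]; last by rewrite /= eqxx.
  by rewrite (blocks_blk hBq hi) pidx_in.
exists (iota q); split; first by move=> s hs; exact: iota_Autgr.
split.
  move=> s t hs ht; rewrite /iota MpM; apply: eq_Mp => x.
  exact: pidx_comp.
split=> // s t hs ht e.
have hs' := hs; have ht' := ht.
case: hs' => hps _; case: ht' => hpt _.
apply/permP => B.
case hBq : (B \in blocks q); last first.
  have /out_perm -> : B \notin blocks q by rewrite hBq.
    by rewrite (out_perm hpt) ?hBq.
  done.
case/imsetP: hBq => i _ ->.
have hsb := sblk_blocks hs i; have htb := sblk_blocks ht i.
have h1 : iota q s (pidx q s i) i != 0 by rewrite /iota /Mp mxE eqxx oner_neq0.
rewrite e in h1.
have bi : blk q i \in blocks q by rewrite imset_f.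
have := hB t _ ht bi i _ (blk_refl q i) h1.
move=> hin.
by rewrite (blocks_blk hsb (pidx_in hs i)) (blocks_blk htb hin).
Qed.
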